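(* Let $l,d,t>0$ and $R_{t,d,l}(z)=t+(2l+2d-t)z+(2l-2d-t)z^2+tz^3$. (1) $R_{t,d,l}$ has two (non-real) complex conjugate roots if and only if $l\,q_1(t,l)<d<l\,q_2(t,l)$. (2) If $z_0$ denotes a non-real root of $R_{t,d,l}$ in the upper half plane (when it exists), then $|z_0|>1$. (3) If $d\ge l\,q_2(t,l)$ and $z_{\max}$ denotes the largest real root of $R_{t,d,l}$, then $z_{\max}>1$. (4) If $d\le l\,q_1(t,l)$ and $z_{\min}$ denotes the smallest real root of $R_{t,d,l}$, then $z_{\min}<-1$.
   Context: $q_2(t,l)=\sqrt{-\frac{t^2}{2l^2}+\frac{5t}{l}+1+\frac12\frac{t^2}{l^2}\bigl(1+\frac{4l}{t}\bigr)^{3/2}}$, and $q_1(t,l)=\sqrt{-\frac{t^2}{2l^2}+\frac{5t}{l}+1-\frac12\frac{t^2}{l^2}\bigl(1+\frac{4l}{t}\bigr)^{3/2}}$ if $0\le t/l<\frac12$, while $q_1(t,l)=0$ if $t/l\ge\frac12$. *)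

(* Defs.v *)
From Stdlib Require Import Reals Lra.
From Coquelicot Require Import Coquelicot.
Open Scope R_scope.

Definition q2 (t l : R) : R :=
  sqrt (- t^2 / (2 * l^2) + 5 * t / l + 1
        + / 2 * (t^2 / l^2) * Rpower (1 + 4 * l / t) (3 / 2)).

Definition q1 (t l : R) : R :=
  if Rlt_dec (t / l) (1 / 2) then
    sqrt (- t^2 / (2 * l^2) + 5 * t / l + 1
          - / 2 * (t^2 / l^2) * Rpower (1 + 4 * l / t) (3 / 2))
  else 0.

Definition Rtdl (t d l z : R) : R :=
  t + (2*l + 2*d - t) * z + (2*l - 2*d - t) * z^2 + t * z^3.

Definition RtdlC (t d l : R) (z : C) : C :=
  (RtoC t + RtoC (2*l + 2*d - t) * z + RtoC (2*l - 2*d - t) * (z * z)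
   + RtoC t * (z * z * z))%C.

(* Main.v *)
Require Import Defs.
From Stdlib Require Import Reals Lra Psatz.
From Coquelicot Require Import Coquelicot.
Open Scope R_scope.

Definition Pr (t a b z : R) := t + a*z + b*z^2 + t*z^3.
Definition Disc (t a b : R) := 18*t^2*a*b - 4*b^3*t + a^2*b^2 - 4*t*a^3 - 27*t^4.

Lemma disc_factor t a b r : r <> 0 -> Pr t a b r = 0 ->
  Disc t a b = ((b + t*r)^2 - 4*t*(a + b*r + t*r^2)) * (t*r^2 + (b+t*r)*r + (a + b*r + t*r^2))^2.
Proof.
  intros hr hP. unfold Pr in hP.
  replace a with (-(t + b*r^2 + t*r^3)/r) by (field_simplify_eq; [lra| auto]).
  unfold Disc. field. auto.
Qed.

Lemma disc_eq t d l : Disc t (2*l+2*d-t) (2*l-2*d-t) = 16*(d^2 - (-t^2/2 + 5*t*l + l^2))^2 - 4*t*(t+4*l)^3.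
Proof. unfold Disc. field. Qed.

Lemma RtdlC_comp t d l x y : RtdlC t d l (x,y) =
  (t + (2*l+2*d-t)*x + (2*l-2*d-t)*(x^2-y^2) + t*(x^3-3*x*y^2),
   (2*l+2*d-t)*y + (2*l-2*d-t)*(2*x*y) + t*(3*x^2*y-y^3)).
Proof.
  unfold RtdlC, Cplus, Cmult, RtoC; simpl. f_equal; ring.
Qed.

Lemma Rtdl_Pr t d l z : Rtdl t d l z = Pr t (2*l+2*d-t) (2*l-2*d-t) z.
Proof. reflexivity. Qed.

Lemma real_root t d l : 0 < t -> 0 < d -> 0 < l ->
  exists r, -1 < r < 0 /\ Rtdl t d l r = 0.
Proof.
  intros ht hd hl.
  destruct (IVT (Rtdl t d l) (-1) 0) as [r [hr1 hr2]].
  - intros x. unfold Rtdl. reg.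
  - lra.
  - unfold Rtdl. nra.
  - unfold Rtdl. nra.
  - exists r. split; auto.
    split.
    + destruct (Req_dec r (-1)) as [e|e]; [subst; unfold Rtdl in hr2; nra| lra].
    + destruct (Req_dec r 0) as [e|e]; [subst; unfold Rtdl in hr2; nra| lra].
Qed.

Definition A0 t l := - t^2 / (2 * l^2) + 5 * t / l + 1.
Definition B0 t l := / 2 * (t^2 / l^2) * Rpower (1 + 4 * l / t) (3 / 2).

Lemma q2_eq t l : q2 t l = sqrt (A0 t l + B0 t l). Proof. reflexivity. Qed.
Lemma q1_eq t l : q1 t l = if Rlt_dec (t / l) (1 / 2) then sqrt (A0 t l - B0 t l) else 0.
Proof. reflexivity. Qed.

Lemma B0_facts t l : 0 < t -> 0 < l -> exists s,
  1 <= s /\ s*s = 1 + 4*l/t /\ l^2 * B0 t l = t*(t+4*l)/2 * s.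
Proof.
  intros ht hl.
  assert (hX : 0 < 1 + 4*l/t) by (assert (0 < 4*l/t) by (apply Rdiv_lt_0_compat; lra); lra).
  exists (sqrt (1 + 4*l/t)). split; [|split].
  - rewrite <- sqrt_1 at 1. apply sqrt_le_1_alt. assert (0 < 4*l/t) by (apply Rdiv_lt_0_compat; lra). lra.
  - apply sqrt_sqrt; lra.
  - unfold B0. replace (3/2) with (1 + /2) by field.
    rewrite Rpower_plus, Rpower_1, Rpower_sqrt by lra. field. lra.
Qed.

Lemma q_lemma t d l : 0 < t -> 0 < d -> 0 < l ->
  let D := Disc t (2*l+2*d-t) (2*l-2*d-t) in
  (D < 0 <-> (l * q1 t l < d /\ d < l * q2 t l))
  /\ (l * q2 t l <= d -> 0 <= D /\ l < d)
  /\ (d <= l * q1 t l -> 0 <= D /\ d <= l - t).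
Proof.
  intros ht hd hl D.
  pose proof (Rgt_not_eq _ _ hl) as hl0. pose proof (Rgt_not_eq _ _ ht) as ht0.
  destruct (B0_facts t l ht hl) as [s [hs1 [hs2 hB]]].
  set (Al := l^2 * A0 t l). set (Bl := l^2 * B0 t l).
  assert (hA : Al = -t^2/2 + 5*t*l + l^2) by (unfold Al, A0; field; auto).
  assert (hBpos : 0 < Bl) by (unfold Bl; rewrite hB; apply Rmult_lt_0_compat; [apply Rmult_lt_0_compat; [nra|lra]|lra]).
  assert (hB2 : Bl^2 = t*(t+4*l)^3/4).
  { unfold Bl; rewrite hB. replace ((t * (t + 4 * l) / 2 * s)^2) with (t^2*(t+4*l)^2/4 * (s*s)) by field.
    rewrite hs2. field. lra. }
  assert (hD : D = 16 * (d^2 - (Al + Bl)) * (d^2 - (Al - Bl))).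
  { unfold D. rewrite disc_eq. rewrite hA. replace (16 * (d ^ 2 - (-t^2/2 + 5*t*l + l^2 + Bl)) * (d ^ 2 - (-t^2/2 + 5*t*l + l^2 - Bl)))
      with (16 * (d ^ 2 - (-t^2/2 + 5*t*l + l^2))^2 - 16 * Bl^2) by ring. rewrite hB2. field. }
  assert (hSl : Al + Bl >= l^2 + 7*t*l).
  { rewrite hA; unfold Bl; rewrite hB. assert (hp : 0 < t*(t+4*l)/2) by nra. assert (t*(t+4*l)/2*(s-1) >= 0) by nra. lra. }
  assert (hAB : Al^2 - Bl^2 = l*(l-2*t)^3) by (rewrite hB2, hA; field).
  assert (hS : 0 < A0 t l + B0 t l).
  { assert (l^2 * (A0 t l + B0 t l) = Al + Bl) by (unfold Al, Bl; ring). nra. }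
  pose proof (sqrt_sqrt _ (Rlt_le _ _ hS)) as hq2s. rewrite <- q2_eq in hq2s.
  pose proof (sqrt_pos (A0 t l + B0 t l)) as hq2p. rewrite <- q2_eq in hq2p.
  assert (hq2 : (l * q2 t l)^2 = Al + Bl) by (unfold Al, Bl; replace (l^2*A0 t l + l^2*B0 t l) with (l^2*(A0 t l + B0 t l)) by ring; rewrite <- hq2s; ring).
  assert (hq2nn : 0 <= l * q2 t l) by nra.
  assert (hq1 : 0 <= l * q1 t l /\ (l * q1 t l)^2 = Rmax 0 (Al - Bl) /\ (2*t < l -> 0 < Al - Bl)
                /\ (l <= 2*t -> q1 t l = 0)).
  { rewrite q1_eq. destruct (Rlt_dec (t/l) (1/2)) as [h|h].
    - assert (h2 : 2*t < l) by (assert (t/l*l = t) by (field; auto); nra).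
      assert (hM : 0 < Al - Bl).
      { assert (0 < (l-2*t)^3) by (apply pow_lt; lra).
        assert (0 < (Al - Bl)*(Al+Bl)) by nra. nra. }
      assert (hM' : 0 < A0 t l - B0 t l).
      { assert (l^2 * (A0 t l - B0 t l) = Al - Bl) by (unfold Al, Bl; ring). nra. }
      pose proof (sqrt_sqrt _ (Rlt_le _ _ hM')) as hss. pose proof (sqrt_pos (A0 t l - B0 t l)).
      rewrite Rmax_right by lra. split; [nra|split; [|split; intros; lra]].
      replace (Al - Bl) with (l^2 * (A0 t l - B0 t l)) by (unfold Al, Bl; ring). set (w := sqrt (A0 t l - B0 t l)) in *. rewrite <- hss. ring.
    - assert (h2 : l <= 2*t).
      { assert (t/l*l = t) by (field; auto). apply Rnot_lt_le in h. nra. }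
      assert (hM : Al - Bl <= 0).
      { assert ((l-2*t)^3 <= 0) by (replace ((l-2*t)^3) with ((l-2*t)*(l-2*t)^2) by ring; pose proof (pow2_ge_0 (l-2*t)); nra).
        assert ((Al - Bl)*(Al+Bl) <= 0) by nra. nra. }
      rewrite Rmax_left by lra. split; [lra|split; [ring|split; intros; [lra|reflexivity]]]. }
  destruct hq1 as [hq1nn [hq1s [hq1a hq1b]]].
  split; [|split].
  - rewrite hD. split.
    + intro hneg.
      assert (hcase : d^2 < Al + Bl /\ Al - Bl < d^2).
      { destruct (Rlt_le_dec (d^2) (Al+Bl)); destruct (Rlt_le_dec (Al - Bl) (d^2)); try (split; lra); nra. }
      split.
      * destruct (Rle_dec (Al - Bl) 0).
        -- rewrite Rmax_left in hq1s by lra. nra.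
        -- rewrite Rmax_right in hq1s by lra. nra.
      * nra.
    + intros [h1 h2].
      assert (d^2 < Al + Bl) by nra.
      assert (Al - Bl < d^2).
      { destruct (Rle_dec (Al - Bl) 0).
        -- nra.
        -- rewrite Rmax_right in hq1s by lra. nra. }
      nra.
  - intro h. assert (Al + Bl <= d^2) by nra. split; [rewrite hD; nra| nra].
  - intro h.
    destruct (Rlt_le_dec (2*t) l) as [h2|h2].
    2:{ rewrite hq1b in h by auto. lra. }
    pose proof (hq1a h2).
    rewrite Rmax_right in hq1s by lra.
    assert (d^2 <= Al - Bl) by nra.
    split; [rewrite hD; nra|].
    assert (hcub : t*(14*l - 3*t)^2 < (t+4*l)^3).
    { assert (he : 0 < l - 2*t) by lra.
      assert (hid : (t+4*l)^3 - t*(14*l - 3*t)^2 = 104*t^3 + 272*t^2*(l-2*t) + 236*t*(l-2*t)^2 + 64*(l-2*t)^3) by ring.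
      assert (0 < t^3) by (apply pow_lt; lra). assert (0 < (l-2*t)^3) by (apply pow_lt; lra).
      assert (0 < t^2*(l-2*t)) by (apply Rmult_lt_0_compat; [apply pow_lt|]; lra).
      assert (0 < t*(l-2*t)^2) by (apply Rmult_lt_0_compat; [|apply pow_lt]; lra).
      lra. }
    assert (hk : 14*l - 3*t <= (t+4*l)*s).
    { destruct (Rle_dec (14*l - 3*t) ((t+4*l)*s)) as [|hn]; auto.
      exfalso. apply Rnot_le_lt in hn.
      assert (0 <= (t+4*l)*s) by (apply Rmult_le_pos; lra). assert (((t+4*l)*s)^2 < (14*l-3*t)^2) by nra.
      assert (((t+4*l)*s)^2 = (t+4*l)^3/t) by (replace (((t+4*l)*s)^2) with ((t+4*l)^2*(s*s)) by ring; rewrite hs2; field; auto).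
      assert ((t+4*l)^3 < t*(14*l-3*t)^2).
      { assert ((t+4*l)^3 = t * ((t+4*l)^3/t)) by (field; auto). nra. }
      lra. }
    assert (Al - Bl <= (l-t)^2) by (rewrite hA; unfold Bl; rewrite hB; nra).
    nra.
Qed.

Lemma factor_comp t d l r x y :
  let a := 2*l+2*d-t in let b := 2*l-2*d-t in
  let c1 := b + t*r in let c0 := a + b*r + t*r^2 in
  Rtdl t d l r = 0 ->
  RtdlC t d l (x,y) = ((x-r)*(t*(x^2-y^2)+c1*x+c0) - y*((2*t*x+c1)*y),
                       (x-r)*((2*t*x+c1)*y) + y*(t*(x^2-y^2)+c1*x+c0)).
Proof.
  intros a b c1 c0 h. rewrite RtdlC_comp. unfold Rtdl in h.
  f_equal; unfold c1, c0, a, b; [|ring].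
  replace (t + (2 * l + 2 * d - t) * x + (2 * l - 2 * d - t) * (x ^ 2 - y ^ 2) + t * (x ^ 3 - 3 * x * y ^ 2))
    with ((x - r) * (t * (x ^ 2 - y ^ 2) + (2 * l - 2 * d - t + t * r) * x + (2 * l + 2 * d - t + (2 * l - 2 * d - t) * r + t * r ^ 2)) -
 y * ((2 * t * x + (2 * l - 2 * d - t + t * r)) * y) + (t + (2 * l + 2 * d - t) * r + (2 * l - 2 * d - t) * r ^ 2 + t * r ^ 3)) by ring.
  rewrite h. ring.
Qed.

Lemma real_factor t d l r w :
  let a := 2*l+2*d-t in let b := 2*l-2*d-t in
  let c1 := b + t*r in let c0 := a + b*r + t*r^2 in
  Rtdl t d l r = 0 -> Rtdl t d l w = (w - r) * (t*w^2 + c1*w + c0).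
Proof.
  intros a b c1 c0 h. unfold Rtdl in *.
  replace (t + (2 * l + 2 * d - t) * w + (2 * l - 2 * d - t) * w ^ 2 + t * w ^ 3)
   with ((w - r) * (t*w^2 + c1*w + c0) + (t + (2 * l + 2 * d - t) * r + (2 * l - 2 * d - t) * r ^ 2 + t * r ^ 3))
   by (unfold c1, c0, a, b; ring).
  rewrite h; ring.
Qed.

Theorem main (t d l : R) (ht : 0 < t) (hd : 0 < d) (hl : 0 < l) :
  ((exists z : C, Im z <> 0 /\ RtdlC t d l z = RtoC 0)
     <-> (l * q1 t l < d /\ d < l * q2 t l))
  /\ (forall z0 : C, 0 < Im z0 -> RtdlC t d l z0 = RtoC 0 -> 1 < Cmod z0)
  /\ (l * q2 t l <= d -> forall zmax : R,
        Rtdl t d l zmax = 0 -> (forall z : R, Rtdl t d l z = 0 -> z <= zmax) ->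
        1 < zmax)
  /\ (d <= l * q1 t l -> forall zmin : R,
        Rtdl t d l zmin = 0 -> (forall z : R, Rtdl t d l z = 0 -> zmin <= z) ->
        zmin < -1).
Proof.
  pose proof (Rgt_not_eq _ _ ht) as ht0.
  destruct (q_lemma t d l ht hd hl) as [Q1 [Q2 Q3]]. simpl in Q1, Q2, Q3.
  destruct (real_root t d l ht hd hl) as [r [hr hPr]].
  assert (hr0 : r <> 0) by (apply Rlt_not_eq; lra).
  set (a := 2*l+2*d-t) in *. set (b := 2*l-2*d-t) in *.
  set (c1 := b + t*r). set (c0 := a + b*r + t*r^2).
  set (del := c1^2 - 4*t*c0).
  assert (hfac := fun x y => factor_comp t d l r x y hPr). cbv zeta in hfac.
  assert (hrf := fun w => real_factor t d l r w hPr). cbv zeta in hrf.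
  fold a b c1 c0 in hfac, hrf.
  assert (hDisc : Disc t a b = del * (t*r^2 + c1*r + c0)^2).
  { rewrite (disc_factor t a b r hr0 hPr). reflexivity. }
  assert (hQr : 4*t*(t*r^2 + c1*r + c0) = (2*t*r+c1)^2 - del) by (unfold del; ring).
  assert (hrc0 : r * c0 = -t).
  { unfold Rtdl in hPr. unfold c0. fold a b in hPr. lra. }
  assert (hneg : Disc t a b < 0 <-> del < 0).
  { rewrite hDisc. split; intro h.
    - destruct (Rlt_le_dec del 0); auto. assert (0 <= (t*r^2+c1*r+c0)^2) by apply pow2_ge_0. nra.
    - assert (0 <= (2*t*r+c1)^2) by apply pow2_ge_0. assert (0 < 4*t*(t*r^2+c1*r+c0)) by lra.
      assert (0 < t*r^2 + c1*r + c0) by nra.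
      assert (0 < (t*r^2+c1*r+c0)^2) by (apply pow_lt; lra). nra. }
  assert (hcr : forall x y, y <> 0 -> RtdlC t d l (x,y) = RtoC 0 ->
                 del < 0 /\ t*(x^2+y^2) = c0).
  { intros x y hy hz. rewrite hfac in hz. unfold RtoC in hz. pose proof (f_equal fst hz) as e1. pose proof (f_equal snd hz) as e2. cbn [fst snd] in e1, e2.
    set (U := t*(x^2-y^2)+c1*x+c0) in *. set (V := (2*t*x+c1)*y) in *.
    assert (hpos : 0 < (x-r)^2 + y^2) by (assert (0 < y^2) by (apply pow2_gt_0; auto); pose proof (pow2_ge_0 (x-r)); lra).
    assert (hU : ((x-r)^2+y^2) * U = 0) by (replace (((x-r)^2+y^2) * U) with ((x-r)*((x-r)*U - y*V) + y*((x-r)*V + y*U)) by ring; rewrite e1, e2; ring).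
    assert (hV : ((x-r)^2+y^2) * V = 0) by (replace (((x-r)^2+y^2) * V) with ((x-r)*((x-r)*V + y*U) - y*((x-r)*U - y*V)) by ring; rewrite e1, e2; ring).
    apply Rmult_integral in hU. destruct hU as [hU|hU]; [lra|].
    apply Rmult_integral in hV. destruct hV as [hV|hV]; [lra|].
    unfold V in hV. apply Rmult_integral in hV. destruct hV as [hV|hV]; [|contradiction].
    unfold U in hU.
    assert (hc0 : c0 = t*(x^2+y^2)) by (replace c1 with (-(2*t*x)) in hU by lra; lra).
    split; [|lra].
    unfold del. replace c1 with (-(2*t*x)) by lra. rewrite hc0.
    assert (0 < y^2) by (apply pow2_gt_0; auto).
    replace ((- (2 * t * x)) ^ 2 - 4 * t * (t * (x ^ 2 + y ^ 2))) with (-(4*t^2*y^2)) by ring.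
    assert (0 < t^2) by (apply pow_lt; lra). assert (0 < t^2*y^2) by (apply Rmult_lt_0_compat; lra). lra. }
  split; [|split; [|split]].
  - split.
    + intros [[x y] [hy hz]]. simpl in hy. apply Q1. apply hneg. apply (hcr x y hy hz).
    + intro h. apply Q1 in h. apply hneg in h.
      exists (-c1/(2*t), sqrt (-del)/(2*t)).
      assert (hs : 0 < sqrt (-del)) by (apply sqrt_lt_R0; lra).
      split.
      * simpl. apply Rgt_not_eq. apply Rdiv_lt_0_compat; lra.
      * rewrite hfac. pose proof (sqrt_sqrt (-del) ltac:(lra)) as hss.
        set (sq := sqrt (-del)) in *.
        assert (hU : t * ((-c1/(2*t))^2 - (sq/(2*t))^2) + c1*(-c1/(2*t)) + c0 = 0).
        { replace ((sq/(2*t))^2) with (sq*sq/(4*t^2)) by (field; auto). rewrite hss. unfold del. field. auto. }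
        assert (hV : 2*t*(-c1/(2*t)) + c1 = 0) by (field; auto).
        rewrite hU, hV. unfold RtoC. f_equal; ring.
  - intros [x y] hy hz. simpl in hy.
    destruct (hcr x y ltac:(lra) hz) as [_ hm].
    unfold Cmod; simpl.
    assert (hX : 1 < x^2 + y^2).
    { assert (r * (t*(x^2+y^2)) = -t) by (rewrite hm; exact hrc0).
      assert (r * (x^2+y^2) = -1).
      { apply (Rmult_eq_reg_l t); [|auto]. replace (t * (r * (x^2+y^2))) with (r * (t*(x^2+y^2))) by ring. lra. }
      nra. }
    assert (h1 : sqrt 1 < sqrt (x^2+y^2)) by (apply sqrt_lt_1_alt; lra).
    rewrite sqrt_1 in h1. replace (x*(x*1)) with (x^2) by ring. replace (y*(y*1)) with (y^2) by ring. exact h1.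
  - intros h zmax hz hmax.
    destruct (Q2 h) as [hD0 hld].
    assert (hdel : 0 <= del) by (destruct (Rlt_le_dec del 0) as [hn|]; [apply hneg in hn; lra|auto]).
    pose proof (sqrt_sqrt del hdel) as hss. pose proof (sqrt_pos del) as hsp.
    set (sq := sqrt del) in *.
    set (W := (-c1 + sq)/(2*t)). set (V := (-c1 - sq)/(2*t)).
    assert (hW : Rtdl t d l W = 0).
    { rewrite hrf. assert (4*t*(t*W^2 + c1*W + c0) = sq*sq - del) by (unfold W, del; field; auto).
      assert (t*W^2 + c1*W + c0 = 0) by (rewrite hss in H; nra). rewrite H0; ring. }
    assert (hWV : r * (W*V) = -1).
    { assert (E: 4*t^2*(W*V) = c1^2 - sq*sq) by (unfold W, V; field; auto). rewrite hss in E. unfold del in E.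
      apply (Rmult_eq_reg_l (4*t^2)); [|apply Rgt_not_eq; assert (0 < t^2) by (apply pow_lt; lra); lra].
      replace (4 * t ^ 2 * (r * (W * V))) with (r * (4*t^2*(W*V))) by ring. rewrite E.
      replace (r * (c1 ^ 2 - (c1 ^ 2 - 4 * t * c0))) with (4*t*(r*c0)) by ring. rewrite hrc0. ring. }
    assert (hsum : W + V = -c1/t) by (unfold W, V; field; auto).
    assert (hc1 : c1 < 0) by (unfold c1, b; nra).
    assert (hsum' : 0 < W + V) by (rewrite hsum; apply Rdiv_lt_0_compat; lra).
    assert (hWV' : V <= W) by (unfold W, V; apply Rmult_le_compat_r; [apply Rlt_le, Rinv_0_lt_compat; lra| lra]).
    assert (1 < W * V) by nra.
    assert (1 < W) by nra.
    specialize (hmax W hW). lra.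
  - intros h zmin hz hmin.
    destruct (Q3 h) as [hD0 hld].
    assert (hdel : 0 <= del) by (destruct (Rlt_le_dec del 0) as [hn|]; [apply hneg in hn; lra|auto]).
    pose proof (sqrt_sqrt del hdel) as hss. pose proof (sqrt_pos del) as hsp.
    set (sq := sqrt del) in *.
    set (W := (-c1 + sq)/(2*t)). set (V := (-c1 - sq)/(2*t)).
    assert (hV0 : Rtdl t d l V = 0).
    { rewrite hrf. assert (4*t*(t*V^2 + c1*V + c0) = sq*sq - del) by (unfold V, del; field; auto).
      assert (t*V^2 + c1*V + c0 = 0) by (rewrite hss in H; nra). rewrite H0; ring. }
    assert (hWV : r * (W*V) = -1).
    { assert (E: 4*t^2*(W*V) = c1^2 - sq*sq) by (unfold W, V; field; auto). rewrite hss in E. unfold del in E.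
      apply (Rmult_eq_reg_l (4*t^2)); [|apply Rgt_not_eq; assert (0 < t^2) by (apply pow_lt; lra); lra].
      replace (4 * t ^ 2 * (r * (W * V))) with (r * (4*t^2*(W*V))) by ring. rewrite E.
      replace (r * (c1 ^ 2 - (c1 ^ 2 - 4 * t * c0))) with (4*t*(r*c0)) by ring. rewrite hrc0. ring. }
    assert (hsum : W + V = -c1/t) by (unfold W, V; field; auto).
    assert (hc1 : 0 < c1) by (unfold c1, b; nra).
    assert (hsum' : W + V < 0).
    { rewrite hsum. unfold Rdiv. assert (0 < c1 * / t) by (apply Rmult_lt_0_compat; [lra|apply Rinv_0_lt_compat; lra]). lra. }
    assert (hWV' : V <= W) by (unfold W, V; apply Rmult_le_compat_r; [apply Rlt_le, Rinv_0_lt_compat; lra| lra]).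
    assert (1 < W * V) by nra.
    assert (V < -1) by nra.
    specialize (hmin V hV0). lra.
Qed.

Theorem proposition5p1 (t d l : R) (ht : 0 < t) (hd : 0 < d) (hl : 0 < l) :
  ((exists z : C, Im z <> 0 /\ RtdlC t d l z = RtoC 0)
     <-> (l * q1 t l < d /\ d < l * q2 t l))
  /\ (forall z0 : C, 0 < Im z0 -> RtdlC t d l z0 = RtoC 0 -> 1 < Cmod z0)
  /\ (l * q2 t l <= d -> forall zmax : R,
        Rtdl t d l zmax = 0 -> (forall z : R, Rtdl t d l z = 0 -> z <= zmax) ->
        1 < zmax)
  /\ (d <= l * q1 t l -> forall zmin : R,
        Rtdl t d l zmin = 0 -> (forall z : R, Rtdl t d l z = 0 -> zmin <= z) ->
        zmin < -1).
Proof. exact (main t d l ht hd hl). Qed.
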